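(* Let $d>2$ be a prime integer, let $\mathcal{H}$ be a $d$-dimensional Hilbert space with orthonormal computational basis $\{|0\rangle,|1\rangle,\dots,|d-1\rangle\}$, and let $w=e^{2\pi i/d}$. Define the Chrestenson operator $$C_d=\frac{1}{\sqrt{d}}\sum_{x,y=0}^{d-1} w^{xy}\,|y\rangle\langle x|,$$ for $n,m\in\{0,1,\dots,d-1\}$ the Weyl operators $$U_{nm}=\sum_{k=0}^{d-1} w^{kn}\,|k\rangle\langle (k+m)\bmod d|,$$ and for $a,b\in\{0,1,\dots,d-1\}$ the Kronecker-Pauli operators $$\Pi_{ab}=\sum_{k=0}^{d-1} w^{(k-a)b}\,|k\rangle\langle (-k+2a)\bmod d|.$$ Then for every $n,m\in\{0,1,\dots,d-1\}$ there exist an integer $k\in\{0,1,\dots,d-1\}$ and a Kronecker-Pauli operator $\Pi$ from the family $\{\Pi_{ab} : a,b\in\{0,1,\dots,d-1\}\}$ (a family of $d^2$ operators) such that $$C_d\,U_{nm}\,C_d = w^{k}\,\Pi.$$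
   Context: Here $|j\rangle\langle j'|$ denotes the rank-one operator $v\mapsto \langle j',v\rangle |j\rangle$ on $\mathcal{H}$, and $x\bmod d$ denotes the representative of $x$ in $\{0,1,\dots,d-1\}$. In the paper the $d^2$ Kronecker-Pauli operators are enumerated as $\Pi_\ell$, $\ell\in\{1,\dots,d^2\}$; the statement above quantifies over this same family. *)

(* Defs.v *)
(* operators on the d-dimensional Hilbert space C^d are d x d
   matrices over algC (algebraic complex numbers), in the computational basis.
   The rank-one operator |j><j'| is the matrix unit with a 1 at entry (j, j'). *)
From mathcomp Require Import all_boot all_order all_algebra all_field.
Set Implicit Arguments. Unset Strict Implicit. Unset Printing Implicit Defensive.
Import Order.TTheory GRing.Theory Num.Theory.
Local Open Scope ring_scope.

(* w = e^{2 pi i / d}: d.-root (-1) is e^{i pi / d} (minimal nonnegative argument). *)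
Definition omega (d : nat) : algC := (d.-root (-1)) ^+ 2.

Definition chrestenson (d : nat) : 'M[algC]_d :=
  \matrix_(y < d, x < d) ((sqrtC d%:R)^-1 * omega d ^+ (x * y)).

Definition weyl (d n m : nat) : 'M[algC]_d :=
  \matrix_(k < d, j < d)
    (if (j : nat) == ((k + m) %% d)%N then omega d ^+ (k * n) else 0).

Definition kpauli (d a b : nat) : 'M[algC]_d :=
  \matrix_(k < d, j < d)
    (if (j : int) == ((- (k : int) + 2 * (a : int)) %% (d : int))%Z
     then omega d ^ (((k : int) - (a : int)) * (b : int))
     else 0).

(* Main.v *)
Require Import Defs.
From mathcomp Require Import all_boot all_order all_algebra all_field.
From mathcomp Require Import ring.
Import Order.TTheory GRing.Theory Num.Theory.
Local Open Scope ring_scope.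

Section S.
Variables (d : nat) (hd : prime d) (hd2 : (2 < d)%N).
Local Notation F := 'F_d.
Local Notation w := (omega d).

Lemma d_gt0 : (0 < d)%N. Proof. exact: prime_gt0. Qed.

Lemma w_d : w ^+ d = 1.
Proof.
rewrite /omega -exprM mulnC exprM rootCK ?d_gt0 //. by rewrite expr2 mulrNN mulr1.
Qed.

Lemma w_neq1 : w != 1.
Proof.
apply/eqP => h.
rewrite /omega in h. set r := d.-root _ in h.
have : (r - 1) * (r + 1) = 0.
  have -> : (r - 1) * (r + 1) = r ^+ 2 - 1 by ring.
  by rewrite [r ^+ 2]h subrr.
move/eqP; rewrite mulf_eq0 => /orP [|].
  rewrite subr_eq0 => /eqP h1.
  have h2 : r ^+ d = -1 by rewrite /r rootCK // d_gt0.
  move: h2; rewrite h1 expr1n => /eqP.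
  by rewrite -subr_eq0 opprK (_ : 1 + 1 = 2%:R) // pnatr_eq0.
rewrite addr_eq0 => /eqP h1.
have : (r < 0) = false by apply: rootC_lt0; apply: ltn_trans hd2.
by rewrite h1 oppr_lt0 ltr01.
Qed.

Lemma w_mod t : w ^+ t = w ^+ (t %% d).
Proof. by rewrite {1}(divn_eq t d) mulnC exprD exprM w_d expr1n mul1r. Qed.

Definition e (x : F) : algC := w ^+ (val x).

Lemma e_nat t : e (t%:R) = w ^+ t.
Proof. by rewrite /e /= val_Fp_nat // -w_mod. Qed.

Lemma e_val (x : F) : x = (val x)%:R.
Proof. by rewrite natr_Zp. Qed.

Lemma eD x y : e (x + y) = e x * e y.
Proof. by rewrite [x]e_val [y]e_val -natrD !e_nat exprD. Qed.

Lemma e0 : e 0 = 1.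
Proof. by rewrite /e expr0. Qed.

Lemma eN x : e (- x) = (e x)^-1.
Proof.
have h : e x * e (- x) = 1 by rewrite -eD subrr e0.
have ux : e x != 0 by apply/eqP => h0; move: h; rewrite h0 mul0r => /eqP; rewrite eq_sym oner_eq0.
by rewrite -[e (- x)]mul1r -(mulVf ux) -mulrA h mulr1.
Qed.

Lemma e_int (z : int) : w ^ z = e (z%:~R).
Proof.
case: z => [t|t].
  by change (w ^+ t = e (t%:R)); rewrite e_nat.
rewrite NegzE -exprnN intrN eN -e_nat.
by congr (_^-1); congr e.
Qed.

Lemma valF (x : F) : (val x < d)%N.
Proof. by apply: leq_trans (ltn_ord x) _; rewrite Fp_cast. Qed.

Definition toI (x : F) : 'I_d := Ordinal (valF x).

Lemma toIK (x : F) : ((toI x : nat)%:R : F) = x.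
Proof. by rewrite /= natr_Zp. Qed.

Lemma castI (j : 'I_d) x : ((j : nat) == x %% d)%N = ((j%:R : F) == x%:R).
Proof.
apply/eqP/eqP => [h|h].
  by rewrite h Fp_nat_mod.
by have := congr1 val h; rewrite /= !val_Fp_nat // modn_small.
Qed.

Lemma sumIF (G : F -> algC) : \sum_(i < d) G ((i : nat)%:R) = \sum_(x : F) G x.
Proof.
rewrite (reindex toI) /=; first by apply: eq_bigr => x _; rewrite toIK.
exists (fun i : 'I_d => ((i : nat)%:R : F)) => [x _|i _]; first exact: toIK.
by apply: val_inj; rewrite /= val_Fp_nat // modn_small.
Qed.

Lemma sum_e (T : F) : \sum_(x : F) e (x * T) = if T == 0 then d%:R else 0.
Proof.
case: eqP => [->|/eqP nT].
  under eq_bigr do rewrite mulr0 e0.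
  by rewrite sumr_const card_Fp.
have -> : \sum_(x : F) e (x * T) = \sum_(x : F) e x by rewrite [RHS](reindex_inj (mulIf nT)).
rewrite -sumIF.
under eq_bigr do rewrite e_nat.
have := subrX1 w d; rewrite w_d subrr => /esym/eqP; rewrite mulf_eq0 subr_eq0 (negbTE w_neq1) /=.
by move/eqP.
Qed.


Lemma condI (z : 'I_d) (r : int) :
  ((z : int) == (r %% (d : int))%Z) = ((((z : nat)%:R : F)) == r%:~R).
Proof.
have d0 : (d : int) != 0 by rewrite eqz_nat -lt0n d_gt0.
have ge0 := modz_ge0 r d0.
have lt : (r %% (d : int))%Z < d by apply: ltz_pmod; rewrite ltz_nat d_gt0.
have -> : r%:~R = ((`|(r %% (d : int))%Z|%N)%:R : F).
  rewrite {1}(divz_eq r d) intrD intrM.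
  have -> : ((d : int)%:~R : F) = 0 by rewrite -pmulrn pchar_Fp_0.
  by rewrite mulr0 add0r -{1}(gez0_abs ge0).
rewrite -castI -[X in _ == X](gez0_abs ge0) eqz_nat modn_small //.
by rewrite -ltz_nat gez0_abs.
Qed.

Let s : algC := (sqrtC d%:R)^-1.

Lemma ss : s * s * d%:R = 1.
Proof.
rewrite /s -expr2 exprVn sqrtCK mulVf //.
by rewrite pnatr_eq0 -lt0n d_gt0.
Qed.

Lemma chrE (y x : 'I_d) :
  chrestenson d y x = s * e (((x : nat)%:R : F) * (y : nat)%:R).
Proof. by rewrite mxE -natrM e_nat. Qed.

Lemma lhsE (n m y z : 'I_d) :
  (chrestenson d *m weyl d n m *m chrestenson d) y z =
  let N := ((n : nat)%:R : F) in let M := ((m : nat)%:R : F) in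
  let Y := ((y : nat)%:R : F) in let Z := ((z : nat)%:R : F) in
  if Y + N + Z == 0 then e (- (M * (Y + N))) else 0.
Proof.
cbv zeta.
set N := ((n : nat)%:R : F); set M := ((m : nat)%:R : F).
set Y := ((y : nat)%:R : F); set Z := ((z : nat)%:R : F).
have inner : forall j : 'I_d, (chrestenson d *m weyl d n m) y j =
    s * e ((((j : nat)%:R : F) - M) * (Y + N)).
  move=> j; rewrite mxE.
  under eq_bigr => k _ do rewrite chrE mxE castI natrD -e_nat natrM.
  rewrite (sumIF (fun x => s * e (x * Y) *
     (if ((j : nat)%:R : F) == x + M then e (x * N) else 0))).
  rewrite (bigD1 (((j : nat)%:R : F) - M)) //= subrK eqxx big1 ?addr0.
    by rewrite -mulrA -eD mulrDr [_ * Y]mulrC [_ * N]mulrC.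
  move=> x /negbTE nx; case: eqP; last by rewrite mulr0.
  by move=> h; move: nx; rewrite h addrK eqxx.
rewrite mxE.
under eq_bigr => j _ do rewrite inner chrE.
rewrite (sumIF (fun x => s * e ((x - M) * (Y + N)) * (s * e (Z * x)))).
have -> : \sum_(x : F) s * e ((x - M) * (Y + N)) * (s * e (Z * x)) =
   s * s * e (- (M * (Y + N))) * \sum_(x : F) e (x * (Y + N + Z)).
  rewrite mulr_sumr; apply: eq_bigr => x _.
  rewrite mulrACA -eD -[RHS]mulrA -eD; congr (_ * e _); ring.
rewrite (sum_e (Y + N + Z)); case: ifP => _; last by rewrite mulr0.
by rewrite mulrAC ss mul1r.
Qed.

End S.

Theorem mainTheorem1 (d : nat) (hd : prime d) (hd2 : (2 < d)%N) :
  forall n m : 'I_d,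
  exists (k : 'I_d) (a b : 'I_d),
    chrestenson d *m weyl d n m *m chrestenson d = (omega d ^+ k) *: kpauli d a b.
Proof.
move=> n m.
pose N := ((n : nat)%:R : 'F_d); pose M := ((m : nat)%:R : 'F_d).
pose A := - N / 2; pose B := - M; pose K := - (M * (N + A)).
have two : (2 : 'F_d) != 0.
  apply/eqP => /(congr1 val) /=; rewrite Fp_cast // (@modn_small 1) ?modn_small //; exact: ltn_trans hd2.
exists (@toI d hd K), (@toI d hd A), (@toI d hd B).
apply/matrixP => y z.
rewrite lhsE //; cbv zeta; rewrite mxE mxE (@condI d hd) -e_nat // toIK // e_int //.
rewrite !intrM !intrB !intrD !intrN -!pmulrn !toIK //.
set Y := ((y : nat)%:R : 'F_d); set Z := ((z : nat)%:R : 'F_d).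
rewrite ?natrM ?natrD ?toIK //.
have -> : (Z == - Y + (1 + 1) * A) = (Y + N + Z == 0).
  rewrite /A; apply/eqP/eqP => h.
    rewrite h; field; exact: two.
  have -> : Z = - (Y + N) by apply/eqP; rewrite -addr_eq0 addrC h.
  field; exact: two.
case: ifP => _; last by rewrite mulr0.
rewrite -eD //; congr e; rewrite /K /B; ring.
Qed.
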